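(* There exists a matroid $M$ and a shelling order $<$ of the independence complex $\mathcal{I}(M)$ such that the induced order $<_\bullet$ is not a shelling order of the dual matroid polytope $P_M^*$.
   Context: For a matroid $M$ on finite set $E$ with bases $\mathcal{B}(M)$, $\mathcal{I}(M)$ is the simplicial complex of independent sets. The matroid polytope is $P_M=\mathrm{conv}\{\chi_B: B\in\mathcal{B}(M)\}\subset\mathbb{R}^E$ ($\chi_B$ the characteristic vector of $B$), and $P_M^*$ is its dual polytope, whose facets $F_B$ correspond bijectively to the vertices $\chi_B$, i.e. to bases. For an order $<$ on $\mathcal{B}(M)$, $<_\bullet$ is the order $F_B<_\bullet F_{B'}$ iff $B<B'$. A shelling order of a pure simplicial complex is a total order $F_1<\dots<F_k$ of its facets such that for each $j\ge2$, $\langle F_1,\dots,F_{j-1}\rangle\cap\langle F_j\rangle$ is pure of dimension one less than the complex. A shelling of a polygon orders its edges so each edge after the first shares a vertex with an earlier one; a shelling of a polytope of dimension $\ge3$ is an order $F_1,\dots,F_k$ of facets such that for $j\ge2$, $F_j\cap\bigcup_{i<j}F_i$ is a union of facets of $F_j$ forming an initial segment of a shelling order of $F_j$. *)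

(* Defs.v *)
From mathcomp Require Import all_boot all_order all_algebra.
Set Implicit Arguments. Unset Strict Implicit. Unset Printing Implicit Defensive.
Import Order.TTheory GRing.Theory Num.Theory.

Definition is_matroid_bases (n : nat) (BB : {set {set 'I_n}}) : Prop :=
  BB != set0 /\
  forall B1 B2, B1 \in BB -> B2 \in BB ->
    forall x, x \in B1 :\: B2 ->
      exists2 y, y \in B2 :\: B1 & (y |: (B1 :\ x)) \in BB.

Definition pure_card (n : nat) (K : {set {set 'I_n}}) (m : nat) : Prop :=
  (forall S, S \in K -> exists2 T, T \in K & S \subset T /\ #|T| = m) /\
  (forall S, S \in K -> #|S| <= m).

(* The facets of I(M) are the bases.  s lists them in the order F_1 < ... < F_k;
   <F_1..F_{j-1}> ∩ <F_j> = subsets of F_j contained in some earlier F_i. *)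
Definition is_shelling_I (n : nat) (BB : {set {set 'I_n}}) (s : seq {set 'I_n}) : Prop :=
  uniq s /\ (forall B, B \in s <-> B \in BB) /\
  forall j, 0 < j < size s ->
    pure_card [set S : {set 'I_n} | (S \subset nth set0 s j) &&
                 [exists i : 'I_(size s), (i < j) && (S \subset nth set0 s i)]]
              (#|nth set0 s j|).-1.

(* Faces of P_M are encoded by their vertex sets, i.e. sets of bases. *)
Definition wsum (n : nat) (w : 'I_n -> rat) (B : {set 'I_n}) : rat := (\sum_(i in B) w i)%R.

(* nonempty faces of P_M = sets of vertices maximizing a linear functional *)
Definition is_face (n : nat) (BB : {set {set 'I_n}}) (X : {set {set 'I_n}}) : Prop :=
  exists w : 'I_n -> rat,
    X = [set B in BB | [forall B' in BB, (wsum w B' <= wsum w B)%R]].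

(* homogenized characteristic vector (1, chi_B) *)
Definition chi1 (n : nat) (B : {set 'I_n}) : 'rV[rat]_(n.+1) :=
  \row_(j < n.+1) (if unlift ord0 j is Some i then (i \in B)%:R else 1)%R.

(* frk X = 1 + affine dimension of conv{chi_B : B in X}  (0 for X empty) *)
Definition frk (n : nat) (X : {set {set 'I_n}}) : nat :=
  \rank (\sum_(B in X) <<chi1 B>>)%MS.

(* A face G of P_M corresponds to the face G^o of P_M^* (inclusion reversed,
   dim G^o = dim P_M - 1 - dim G); X = set0 encodes P_M^* itself.
   Facets of X^o  <->  faces Y of P_M covering X. *)
Definition is_dfacet (n : nat) (BB X Y : {set {set 'I_n}}) : Prop :=
  is_face BB Y /\ X \proper Y /\ frk Y = (frk X).+1.

(* dshell BB k X s : s is a shelling order of the facets of the face X^o of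
   P_M^*, where k = dim X^o.  Z^o ⊆ Y1^o ∩ Y2^o  iff  Y1 ∪ Y2 ⊆ Z. *)
Fixpoint dshell (n : nat) (BB : {set {set 'I_n}}) (k : nat)
    (X : {set {set 'I_n}}) (s : seq {set {set 'I_n}}) {struct k} : Prop :=
  uniq s /\ (forall Y, Y \in s <-> is_dfacet BB X Y) /\
  match k with
  | 0 => True
  | k1.+1 =>
    match k1 with
    | 0 => True
    | k2.+1 =>
      match k2 with
      | 0 => (* polygon: each edge after the first shares a vertex with an earlier one;
                vertices of P_M^* are Z^o for faces Z of P_M of dimension dim P_M - 1 *)
        forall j, 0 < j < size s ->
          exists2 i, i < j &
            exists Z, is_face BB Z /\ frk Z = (frk BB).-1 /\
                      nth set0 s i :|: nth set0 s j \subset Z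
      | _.+1 =>
        forall j, 0 < j < size s ->
          exists t : seq {set {set 'I_n}}, exists r : nat,
            dshell BB k1 (nth set0 s j) t /\ 0 < r <= size t /\
            (* F_j ∩ (∪_{i<j} F_i) = ∪_{l<r} G_l, compared face by face *)
            forall Z, is_face BB Z ->
              ((exists2 i, i < j & nth set0 s i :|: nth set0 s j \subset Z) <->
               (exists2 l, l < r & nth set0 t l \subset Z))
      end
    end
  end.

(* shelling of P_M^* (dim P_M^* = dim P_M = frk BB - 1); its facets F_B are
   encoded by the vertex faces [set B] of P_M. *)
Definition dual_polytope_shelling (n : nat) (BB : {set {set 'I_n}})
    (s : seq {set {set 'I_n}}) : Prop :=
  dshell BB (frk BB).-1 set0 s.

(* Main.v *)
Require Import Defs.
From mathcomp Require Import all_boot all_order all_algebra.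
From mathcomp Require Import ring lra zify.
Set Implicit Arguments. Unset Strict Implicit. Unset Printing Implicit Defensive.
Import Order.TTheory GRing.Theory Num.Theory.

Section LA.
Variable n : nat.
Local Open Scope ring_scope.

Definition fcol (M : rat) (w : 'I_n -> rat) : 'cV[rat]_(n.+1) :=
  \col_(j < n.+1) (if unlift ord0 j is Some i then - w i else M).

Lemma wsumE (w : 'I_n -> rat) B : wsum w B = \sum_(i < n) (i \in B)%:R * w i.
Proof.
rewrite /wsum big_mkcond /=; apply: eq_bigr => i _.
by case: (i \in B); rewrite ?mul1r ?mul0r.
Qed.

Lemma chi1_fcol (B : {set 'I_n}) M w :
  chi1 B *m fcol M w = (M - wsum w B)%:M.
Proof.
apply/matrixP => i j; rewrite !ord1 !mxE big_ord_recl /= !mxE /=.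
rewrite unlift_none mul1r wsumE -sumrN; congr (_ + _).
apply: eq_bigr => k _; rewrite !mxE liftK mulrN //.
Qed.

Definition SX (X : {set {set 'I_n}}) := (\sum_(B in X) <<chi1 B>>)%MS.

Lemma SX_sub (X Y : {set {set 'I_n}}) : X \subset Y -> (SX X <= SX Y)%MS.
Proof.
move=> sXY; apply/sumsmx_subP => B HB.
by apply: (sumsmx_sup B); [apply: (subsetP sXY) | ].
Qed.

Lemma frk_mono (X Y : {set {set 'I_n}}) : X \subset Y -> (frk X <= frk Y)%N.
Proof. by move=> h; apply: mxrankS; apply: SX_sub. Qed.

Lemma SX_ker (X : {set {set 'I_n}}) (f : 'cV[rat]_(n.+1)) :
  (forall B, B \in X -> chi1 B *m f = 0) -> (SX X <= kermx f)%MS.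
Proof.
move=> h; apply/sumsmx_subP => B HB; rewrite genmxE; apply/sub_kermxP; exact: h.
Qed.

Lemma frk_lt (X Y : {set {set 'I_n}}) e (f : 'cV[rat]_(n.+1)) : X \subset Y -> e \in Y ->
  (forall B, B \in X -> chi1 B *m f = 0) -> chi1 e *m f != 0 ->
  (frk X < frk Y)%N.
Proof.
move=> sXY eY hX he.
have : (SX X < SX Y)%MS.
  rewrite ltmxE SX_sub //=; apply/negP => sYX.
  have : (chi1 e <= kermx f)%MS.
    apply: submx_trans (SX_ker hX).
    apply: submx_trans sYX.
    apply: (sumsmx_sup e) => //; by rewrite genmxE.
  by move/sub_kermxP => h0; rewrite h0 eqxx in he.
exact: rank_ltmx.
Qed.

Lemma frk_le (X : {set {set 'I_n}}) (f : 'cV[rat]_(n.+1)) :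
  (forall B, B \in X -> chi1 B *m f = 0) -> f != 0 -> (frk X <= n)%N.
Proof.
move=> hX hf; have := mxrankS (SX_ker hX); rewrite mxrank_ker.
have : (\rank f != 0)%N by rewrite mxrank_eq0.
rewrite /frk /SX; move: (\rank f) => k; case: k => //= k _.
move=> h; apply: leq_trans h _; rewrite subSS leq_subr //.
Qed.

End LA.

Section LA2.
Variable n : nat.
Local Open Scope ring_scope.

Lemma van M w (B : {set 'I_n}) : M = wsum w B -> chi1 B *m fcol M w = 0.
Proof.
move=> h; rewrite chi1_fcol -h subrr; apply/matrixP => i j; by rewrite !mxE mul0rn.
Qed.

Lemma nvan M w (B : {set 'I_n}) : M != wsum w B -> chi1 B *m fcol M w != 0.
Proof.
move=> h; apply/negP => /eqP /matrixP /(_ ord0 ord0); rewrite chi1_fcol !mxE eqxx mulr1n.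
by move/eqP; rewrite subr_eq0 (negbTE h).
Qed.

Lemma wsum2 w (x y : 'I_n) : x != y -> wsum w [set x; y] = w x + w y.
Proof.
move=> xy; by rewrite /wsum big_setU1 ?big_set1 // inE.
Qed.
End LA2.

Section Gen.
Variable n : nat.
Local Open Scope ring_scope.

Definition wpq (p q : 'I_n) : 'I_n -> rat := fun i => (i == p)%:R - (i == q)%:R.

Lemma sum_ind (p : 'I_n) (B : {set 'I_n}) :
  \sum_(i in B) ((i == p)%:R : rat) = (p \in B)%:R.
Proof.
rewrite big_mkcond (bigD1 p) //= eqxx big1 ?addr0.
  by case: (p \in B).
by move=> i /negbTE ->; case: (i \in B).
Qed.

Lemma wsum_pq p q B : wsum (wpq p q) B = (p \in B)%:R - (q \in B)%:R.
Proof. by rewrite /wsum /wpq sumrB !sum_ind. Qed.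

Lemma wsum_compl w (A : {set 'I_n}) : wsum w A + wsum w (~: A) = wsum w setT.
Proof.
by rewrite /wsum [RHS](big_setID A) /= setTI setDE setTI.
Qed.

Lemma face_pq (BB : {set {set 'I_n}}) p q B0 : B0 \in BB -> p \in B0 -> q \notin B0 ->
  is_face BB [set B in BB | (p \in B) && (q \notin B)].
Proof.
move=> HB0 pB0 qB0; exists (wpq p q); apply/setP => B; rewrite !inE.
case HB: (B \in BB) => //=; apply/idP/forall_inP.
  case/andP => pB qB B' _; rewrite !wsum_pq pB (negbTE qB).
  by case: (p \in B'); case: (q \in B'); rewrite /= ?subr0 ?subrr ?ler01 ?lexx ?lerN10 // lerBlDr; lra.
move=> /(_ B0 HB0); rewrite !wsum_pq pB0 (negbTE qB0).
by case: (p \in B); case: (q \in B); rewrite //=; lra.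
Qed.

Lemma face_full (BB : {set {set 'I_n}}) Z B : (forall B, B \in BB -> ~: B \in BB) ->
  is_face BB Z -> B \in Z -> ~: B \in Z -> Z = BB.
Proof.
move=> hC [w ->]; rewrite !inE => /andP[HB /forall_inP H1] /andP[HCB /forall_inP H2].
apply/setP => B'; rewrite inE; case HB': (B' \in BB) => //=.
apply/forall_inP => B'' HB''.
have e1 := wsum_compl w B; have e2 := wsum_compl w B'.
have h1 := H1 _ HB''; have h2 := H2 _ (hC _ HB').
lra.
Qed.

End Gen.

Section Pure.
Variable n : nat.

Lemma pure2 (s : seq {set 'I_n}) j : uniq s -> (forall X, X \in s -> #|X| = 2) ->
  j < size s -> (exists i x, i < j /\ x \in nth set0 s i /\ x \in nth set0 s j) ->
  pure_card [set S : {set 'I_n} | (S \subset nth set0 s j) &&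
                 [exists i : 'I_(size s), (i < j) && (S \subset nth set0 s i)]]
              (#|nth set0 s j|).-1.
Proof.
move=> us c2 js [i [x [ij [xi xj]]]].
have cj : #|nth set0 s j| = 2 by apply: c2; apply: mem_nth.
rewrite cj /=.
have hb : forall S, S \in [set S : {set 'I_n} | (S \subset nth set0 s j) &&
                 [exists i : 'I_(size s), (i < j) && (S \subset nth set0 s i)]] -> #|S| <= 1.
  move=> S; rewrite inE => /andP [Sj /existsP [k /andP [kj Sk]]].
  rewrite leqNgt; apply/negP => cS.
  have ck : #|nth set0 s k| = 2 by apply: c2; apply: mem_nth.
  have e1 : S == nth set0 s j by rewrite eqEcard Sj cj.
  have e2 : S == nth set0 s k by rewrite eqEcard Sk ck.
  have : nth set0 s k == nth set0 s j by rewrite -(eqP e1) -(eqP e2).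
  rewrite nth_uniq ?ltn_ord //.
  move=> /eqP kj'.
  by rewrite kj' ltnn in kj.
split; last exact: hb.
move=> S HS; case: (set_0Vmem S) => [S0|[y yS]].
  exists [set x]; last by rewrite S0 sub0set cards1.
  rewrite inE sub1set xj /=; apply/existsP.
  have iS : i < size s by apply: ltn_trans ij js.
  by exists (Ordinal iS); rewrite ij sub1set.
exists S => //; split => //; apply/eqP; rewrite eqn_leq hb // card_gt0.
by apply/set0Pn; exists y.
Qed.
End Pure.

Definition e0 : 'I_4 := @Ordinal 4 0 isT.
Definition e1 : 'I_4 := @Ordinal 4 1 isT.
Definition e2 : 'I_4 := @Ordinal 4 2 isT.
Definition e3 : 'I_4 := @Ordinal 4 3 isT.

Lemma ord4P (x : 'I_4) : [\/ x = e0, x = e1, x = e2 | x = e3].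
Proof.
case: x => [[|[|[|[|m]]]] H].
- by constructor 1; apply: val_inj.
- by constructor 2; apply: val_inj.
- by constructor 3; apply: val_inj.
- by constructor 4; apply: val_inj.
- by [].
Qed.

Definition BB4 : {set {set 'I_4}} := [set B : {set 'I_4} | #|B| == 2].

Lemma BB4_compl (B : {set 'I_4}) : B \in BB4 -> ~: B \in BB4.
Proof. by rewrite !inE => /eqP h; rewrite cardsCs setCK card_ord h. Qed.

Lemma matroid4 : is_matroid_bases BB4.
Proof.
split.
  apply/set0Pn; exists [set e0; e1]; by rewrite inE cards2.
move=> B1 B2; rewrite !inE => /eqP c1 /eqP c2 x Hx.
have : (0 < #|B2 :\: B1|)%N.
  have e21 : #|B2| = #|B1| by rewrite c1 c2.
  rewrite cardsD e21 setIC -cardsD card_gt0; apply/set0Pn; by exists x.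
rewrite card_gt0 => /set0Pn [y Hy]; exists y => //.
move: Hy Hx; rewrite !inE => /andP[yB1 yB2] /andP[xB2 xB1].
rewrite cardsU1 !inE negb_and yB1 orbT /=.
have := cardsD1 x B1; rewrite xB1 c1 add1n => [[<-]] //.
Qed.

Definition sa : {set 'I_4} := [set e0; e2].
Definition sb : {set 'I_4} := [set e1; e2].
Definition sc : {set 'I_4} := [set e1; e3].
Definition sd : {set 'I_4} := [set e0; e3].
Definition se : {set 'I_4} := [set e0; e1].
Definition sf : {set 'I_4} := [set e2; e3].

Lemma set3P (T : finType) (x a b c : T) : x \in [set a; b; c] -> [\/ x = a, x = b | x = c].
Proof. by rewrite !inE => /orP[/orP[]|] /eqP ->; [constructor 1|constructor 2|constructor 3]. Qed.

Local Open Scope ring_scope.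

Lemma frkBB4 : frk BB4 = 4%N.
Proof.
apply/eqP; rewrite eqn_leq; apply/andP; split.
  apply: (@frk_le _ _ (fcol 2 (fun _ => 1))).
    move=> B; rewrite inE => /eqP cB; apply: van.
    by rewrite /wsum sumr_const cB.
  apply/negP => /eqP /matrixP /(_ ord0 ord0); rewrite !mxE /=.
  by rewrite unlift_none => /eqP.
have h1 : (frk (set0 : {set {set 'I_4}}) < frk [set sd])%N.
  apply: (@frk_lt _ set0 [set sd] sd (fcol 1 (wpq e0 e0))).
  - by rewrite sub0set.
  - by rewrite set11.
  - by move=> B; rewrite inE.
  - by apply: nvan; rewrite wsum_pq subrr.
have h2 : (frk [set sd] < frk [set sd; sa])%N.
  apply: (@frk_lt _ _ _ sa (fcol 1 (wpq e3 e2))).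
  - by rewrite sub1set !inE eqxx.
  - by rewrite !inE eqxx orbT.
  - by move=> B /set1P ->; apply: van; rewrite wsum_pq !inE.
  - by apply: nvan; rewrite wsum_pq !inE.
have h3 : (frk [set sd; sa] < frk [set sd; sa; se])%N.
  apply: (@frk_lt _ _ _ se (fcol 1 (wpq e0 e1))).
  - by rewrite subUset !sub1set !inE !eqxx ?orbT.
  - by rewrite !inE eqxx ?orbT.
  - by move=> B /set2P [->|->]; apply: van; rewrite wsum_pq !inE.
  - by apply: nvan; rewrite wsum_pq !inE.
have h4 : (frk [set sd; sa; se] < frk BB4)%N.
  apply: (@frk_lt _ _ _ sc (fcol 1 (fun i => (i == e0)%:R))).
  - by apply/subsetP => B /set3P [->|->|->]; rewrite inE cards2.
  - by rewrite inE cards2.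
  - by move=> B /set3P [->|->|->]; apply: van; rewrite /wsum sum_ind !inE.
  - by apply: nvan; rewrite /wsum sum_ind !inE.
move: h1 h2 h3 h4; lia.
Qed.

Definition s4 : seq {set 'I_4} := [:: sa; sb; sc; sd; se; sf].

Ltac setdec := rewrite /sa /sb /sc /sd /se /sf ?eqEsubset ?subUset ?sub1set ?inE.

Lemma s4c2 : forall X, X \in s4 -> #|X| = 2%N.
Proof.
have H : all (fun X : {set 'I_4} => #|X| == 2%N) s4 by rewrite /= /sa /sb /sc /sd /se /sf !cards2.
by move=> X /(allP H) /eqP.
Qed.

Lemma uniq_s4 : uniq s4.
Proof. rewrite /= !inE; setdec; by []. Qed.

Lemma shellI : is_shelling_I BB4 s4.
Proof.
split; [exact: uniq_s4|split].
  move=> B; split.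
    by move=> /s4c2 h; rewrite inE h.
  rewrite inE => /cards2P [x [y [xy ->]]]; move: xy; rewrite /s4.
  by case: (ord4P x) => ->; case: (ord4P y) => -> //= _; rewrite !inE; setdec.
move=> j /andP [j0 j6]; apply: pure2 => //; [exact: uniq_s4|exact: s4c2|].
case: j j0 j6 => [|[|[|[|[|[|j]]]]]] //= _ _.
- by exists 0%N, e2; setdec.
- by exists 1%N, e1; setdec.
- by exists 0%N, e0; setdec.
- by exists 0%N, e0; setdec.
- by exists 0%N, e2; setdec.
Qed.


Lemma face_sub n (BB Z : {set {set 'I_n}}) : is_face BB Z -> Z \subset BB.
Proof. by case=> w ->; apply/subsetP => B; rewrite inE => /andP[]. Qed.

Lemma compl_sa : ~: sa = sc.
Proof. by apply/setP => z; rewrite !inE; case: (ord4P z) => ->. Qed.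
Lemma compl_sc : ~: sc = sa.
Proof. by rewrite -compl_sa setCK. Qed.
Lemma compl_sb : ~: sb = sd.
Proof. by apply/setP => z; rewrite !inE; case: (ord4P z) => ->. Qed.

Lemma full_frk Z X : is_face BB4 Z -> X \in Z -> ~: X \in Z -> frk Z <> 3%N.
Proof.
move=> fZ XZ cXZ; rewrite (face_full BB4_compl fZ XZ cXZ) frkBB4 //.
Qed.

Local Open Scope ring_scope.

Lemma core (t : seq {set {set 'I_4}}) (r : nat) (P Q : {set 'I_4}) (p q : 'I_4) (m : nat) :
  let EP := [set B in BB4 | (p \in B) && (q \notin B)] in
  (forall B, B \in EP -> (B == P) || (B == sd)) ->
  Q = ~: P ->
  (forall X : {set {set 'I_4}}, [|| sa \in X, sb \in X | sc \in X] -> [|| P \in X, Q \in X | sb \in X]) ->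
  uniq t ->
  (forall i, (i < size t)%N -> is_dfacet BB4 [set sd] (nth set0 t i)) ->
  (forall j, (0 < j < size t)%N ->
          exists2 i, (i < j)%N &
            exists Z, is_face BB4 Z /\ frk Z = 3%N /\
                      nth set0 t i :|: nth set0 t j \subset Z) ->
  (forall i, (i < r)%N -> [|| sa \in nth set0 t i, sb \in nth set0 t i | sc \in nth set0 t i]) ->
  (0 < m)%N -> (m < r)%N -> (r <= size t)%N ->
  nth set0 t m \subset EP -> P \in nth set0 t m -> False.
Proof.
move=> EP HEP HQ HPQ Hu H2 H3 H4 m0 mr rt tmE Ptm.
have ms : (m < size t)%N by apply: leq_trans mr rt.
have [i im [Z [fZ [frZ sub]]]] := H3 m (introT andP (conj m0 ms)).
have ir : (i < r)%N by apply: ltn_trans im mr.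
have is_ : (i < size t)%N by apply: ltn_trans im ms.
move: sub; rewrite subUset => /andP [si sm].
have sdin : forall k, (k < size t)%N -> sd \in nth set0 t k.
  move=> k /H2 [_ [/properP [+ _] _]]; by rewrite sub1set.
case/or3P: (HPQ _ (H4 i ir)) => [Pi|Qi|bi].
- have sub : nth set0 t m \subset nth set0 t i.
    apply/subsetP => B /(subsetP tmE) /HEP /orP [] /eqP ->; first exact: Pi.
    exact: sdin.
  have [fi [_ fri]] := H2 i is_.
  have [fm [_ frm]] := H2 m ms.
  case: (boolP (nth set0 t i \subset nth set0 t m)) => [sim|nsim].
    have : nth set0 t i == nth set0 t m by rewrite eqEsubset sim sub.
    by rewrite nth_uniq // => /eqP eim; rewrite eim ltnn in im.
  case/subsetPn: nsim => e ei em.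
  have eB : e \in BB4 by apply: (subsetP (face_sub fi)).
  have neE : e \notin EP.
    apply/negP => /HEP /orP [] /eqP eq; move: em; rewrite eq => /negP; apply.
      exact: Ptm.
    exact: sdin.
  have hlt : (frk (nth set0 t m) < frk (nth set0 t i))%N.
    apply: (@frk_lt _ _ _ e (fcol 1 (wpq p q)) sub ei).
    + move=> B /(subsetP tmE); rewrite inE => /andP [_ /andP [pB qB]].
      by apply: van; rewrite wsum_pq pB (negbTE qB) subr0.
    + apply: nvan; rewrite wsum_pq; move: neE; rewrite inE eB /=.
      by case: (p \in e); case: (q \in e).
  by rewrite fri frm ltnn in hlt.
- apply: (full_frk fZ (X := P)) => //.
    by apply: (subsetP sm).
  by rewrite -HQ; apply: (subsetP si).
- apply: (full_frk fZ (X := sb)) => //.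
    by apply: (subsetP si).
  by rewrite compl_sb; apply: (subsetP sm); apply: sdin.
Qed.

Lemma notdual : ~ dual_polytope_shelling BB4 [seq [set B] | B <- s4].
Proof.
rewrite /dual_polytope_shelling frkBB4 /=.
move=> [_ [_ Hj]].
have [t [r [[Hu [Hmem Hpoly]] [/andP [r0 rt] HZ]]]] := Hj 3%N isT.
rewrite frkBB4 /= in Hpoly.
have H2 : forall i, (i < size t)%N -> is_dfacet BB4 [set sd] (nth set0 t i).
  by move=> i hi; apply/Hmem; apply: mem_nth.
pose Ea := [set B in BB4 | (e0 \in B) && (e1 \notin B)].
pose Ec := [set B in BB4 | (e3 \in B) && (e2 \notin B)].
have fEa : is_face BB4 Ea by apply: (@face_pq _ _ _ _ sa); rewrite ?inE ?cards2 //; setdec.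
have fEc : is_face BB4 Ec by apply: (@face_pq _ _ _ _ sc); rewrite ?inE ?cards2 //; setdec.
have Ea_el : forall B, B \in Ea -> (B == sa) || (B == sd).
  move=> B; rewrite !inE => /andP [/cards2P [x [y [xy ->]]]]; move: xy.
  by case: (ord4P x) => ->; case: (ord4P y) => -> //= _; setdec.
have Ec_el : forall B, B \in Ec -> (B == sc) || (B == sd).
  move=> B; rewrite !inE => /andP [/cards2P [x [y [xy ->]]]]; move: xy.
  by case: (ord4P x) => ->; case: (ord4P y) => -> //= _; setdec.
have H4 : forall i, (i < r)%N -> [|| sa \in nth set0 t i, sb \in nth set0 t i | sc \in nth set0 t i].
  move=> i ir; have is_ : (i < size t)%N by apply: leq_trans ir rt.
  have [fi _] := H2 i is_.
  have [i' i3] := (HZ _ fi).2 (ex_intro2 _ _ i ir (subxx _)).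
  case: i' i3 => [|[|[|i']]] //= _; rewrite subUset sub1set => /andP [h _];
    by rewrite h ?orbT.
have getl : forall (E : {set {set 'I_4}}) P, is_face BB4 E -> sd \in E -> P \in E ->
   (P \in BB4) ->
   (forall B, B \in E -> (B == P) || (B == sd)) -> P != sd ->
   (exists2 i, (i < 3)%N & nth set0 [:: [set sa]; [set sb]; [set sc]; [set sd]; [set se]; [set sf]] i :|: [set sd] \subset E) ->
   exists2 l, (l < r)%N & (nth set0 t l \subset E) /\ P \in nth set0 t l.
  move=> E P fE sdE PE PB HE Psd hex.
  have [l lr tlE] := (HZ _ fE).1 hex.
  exists l => //; split => //.
  have ls : (l < size t)%N by apply: leq_trans lr rt.
  have [_ [/properP [_ [B Bt BN]] _]] := H2 l ls.
  move: (HE _ (subsetP tlE _ Bt)) => /orP [] /eqP eB; first by rewrite -eB.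
  by move: BN; rewrite eB set11.
have [l lr [tlE atl]] : exists2 l, (l < r)%N & (nth set0 t l \subset Ea) /\ sa \in nth set0 t l.
  apply: getl => //; rewrite ?inE ?cards2; setdec => //.
  by exists 0%N => //=; rewrite subUset !sub1set !inE ?cards2; setdec.
have [l' lr' [tlE' ctl]] : exists2 l, (l < r)%N & (nth set0 t l \subset Ec) /\ sc \in nth set0 t l.
  apply: getl => //; rewrite ?inE ?cards2; setdec => //.
  by exists 2%N => //=; rewrite subUset !sub1set !inE ?cards2; setdec.
case: (ltngtP l l') => [ll|ll|ll].
- apply: (@core t r sc sa e3 e2 l' Ec_el) => //; first by rewrite compl_sc.
  + by move=> X; case: (sa \in X); case: (sb \in X); case: (sc \in X).
  + by apply: leq_ltn_trans ll.
- apply: (@core t r sa sc e0 e1 l Ea_el) => //; first by rewrite compl_sa.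
  + by move=> X; case: (sa \in X); case: (sb \in X); case: (sc \in X).
  + by apply: leq_ltn_trans ll.
- move: atl; rewrite ll => /(subsetP tlE'); rewrite !inE => /and3P [_ h _]; move: h; rewrite /= //.
Qed.

Local Close Scope ring_scope.

Theorem proposition3p3 :
  exists (n : nat) (BB : {set {set 'I_n}}) (s : seq {set 'I_n}),
    is_matroid_bases BB /\ is_shelling_I BB s /\
    ~ dual_polytope_shelling BB [seq [set B] | B <- s].
Proof.
exists 4%N, BB4, s4.
split; [exact: matroid4 | split; [exact: shellI | exact: notdual]].
Qed.
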